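(* Let $a,b,c,d$ be fixed indeterminates and, for $j=1,2$, let $u_j,x_j,y_j$ be indeterminates. For indeterminates (or polynomials) $u,x,y$ put \[ N(u,x,y)=\begin{pmatrix} u & -ad\,y & -ad\,x-bd\,y\\ x & u-bx-cy & -cx-dy\\ y & ax & u-cy\end{pmatrix}, \] and $N_j=N(u_j,x_j,y_j)$ for $j=1,2$. Then $N_1N_2=N_2N_1=N(u_3,x_3,y_3)$, where \begin{align*} u_3&=u_1u_2-ad\,x_2y_1-ad\,x_1y_2-bd\,y_1y_2,\\ x_3&=u_1x_2+u_2x_1-b\,x_1x_2-c\,x_1y_2-c\,x_2y_1-d\,y_1y_2,\\ y_3&=u_1y_2+u_2y_1+a\,x_1x_2-c\,y_1y_2; \end{align*} that is, the product is commutative and is again a matrix of the same form. Moreover: (i) Specializing $a=0$, $b=1$, $c=0$, $d=-D$, one has $\det N(u,x,y)=(u-x)(u^2-Dy^2)$, and taking determinants in $N_1N_2=N(u_3,x_3,y_3)$ yields Brahmagupta's identity \[ (u_1u_2+Dy_1y_2)^2-D(u_1y_2+u_2y_1)^2=(u_1^2-Dy_1^2)(u_2^2-Dy_2^2). \] (ii) Specializing $a=0$, $b=C$, $c=-B$, $d=1$, one has $\det N(u,x,y)=(u-Cx+By)(u^2+Buy+Cy^2)$, and taking determinants in $N_1N_2=N(u_3,x_3,y_3)$ yields, for the principal binary quadratic form $Q(u,y)=u^2+Buy+Cy^2$, \[ Q(u_1u_2-Cy_1y_2,\;u_1y_2+u_2y_1+By_1y_2)=Q(u_1,y_1)\,Q(u_2,y_2),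 \] which is the special case of Gauss' bilinear composition for $Q_1=Q_2=(1,B,C)$.
   Context: $D$, $B$, $C$ denote further indeterminates (or integers). The binary quadratic form $u^2+Buy+Cy^2$ is abbreviated $(1,B,C)$. *)

(* Defs.v *)
(* polynomial identities in indeterminates are stated
   for arbitrary elements of an arbitrary commutative ring. *)
From HB Require Import structures.
From mathcomp Require Import all_boot all_order all_algebra.
Set Implicit Arguments. Unset Strict Implicit. Unset Printing Implicit Defensive.
Import Order.TTheory GRing.Theory Num.Theory.
Local Open Scope ring_scope.

Definition Nmx (R : comPzRingType) (a b c d u x y : R) : 'M[R]_3 :=
  \matrix_(i < 3, j < 3)
    nth 0 (nth [::]
      [:: [:: u; - (a * d * y); - (a * d * x) - b * d * y];
          [:: x; u - b * x - c * y; - (c * x) - d * y];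
          [:: y; a * x; u - c * y]] i) j.

Definition Qform (R : comPzRingType) (B C u y : R) : R := u ^+ 2 + B * u * y + C * y ^+ 2.

(* Main.v *)
Require Import Defs.
From HB Require Import structures.
From mathcomp Require Import all_boot all_order all_algebra ring.
Import GRing.Theory.
Local Open Scope ring_scope.
Lemma detN (R : comPzRingType) (a b c d u x y : R) : \det (Nmx a b c d u x y) =
  u * ((u - b * x - c * y) * (u - c * y) - (- (c * x) - d * y) * (a * x))
  - (- (a * d * y)) * (x * (u - c * y) - (- (c * x) - d * y) * y)
  + (- (a * d * x) - b * d * y) * (x * (a * x) - (u - b * x - c * y) * y).
Proof.
rewrite (expand_det_row _ ord0) !big_ord_recr big_ord0 /=.
rewrite /cofactor !(expand_det_row _ ord0) !big_ord_recr !big_ord0 /=.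
rewrite /cofactor !det_mx11 !mxE /=.
ring.
Qed.
Lemma mulN (R : comPzRingType) (a b c d u1 x1 y1 u2 x2 y2 : R) :
  Nmx a b c d u1 x1 y1 *m Nmx a b c d u2 x2 y2 = Nmx a b c d
   (u1 * u2 - a * d * x2 * y1 - a * d * x1 * y2 - b * d * y1 * y2)
   (u1 * x2 + u2 * x1 - b * x1 * x2 - c * x1 * y2 - c * x2 * y1 - d * y1 * y2)
   (u1 * y2 + u2 * y1 + a * x1 * x2 - c * y1 * y2).
Proof.
apply/matrixP => i j; rewrite !mxE !big_ord_recr big_ord0 /= !mxE.
case: i => [[|[|[|i]]] Hi] //=; case: j => [[|[|[|j]]] Hj] //=; ring.
Qed.

Theorem proposition2p1 (R : comPzRingType) (a b c d u1 x1 y1 u2 x2 y2 : R) :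
  let u3 := u1 * u2 - a * d * x2 * y1 - a * d * x1 * y2 - b * d * y1 * y2 in
  let x3 := u1 * x2 + u2 * x1 - b * x1 * x2 - c * x1 * y2 - c * x2 * y1
            - d * y1 * y2 in
  let y3 := u1 * y2 + u2 * y1 + a * x1 * x2 - c * y1 * y2 in
  (Nmx a b c d u1 x1 y1 *m Nmx a b c d u2 x2 y2 = Nmx a b c d u3 x3 y3) /\
      (Nmx a b c d u2 x2 y2 *m Nmx a b c d u1 x1 y1 = Nmx a b c d u3 x3 y3) /\
      (* (i) *)
      (forall D u x y : R,
         \det (Nmx 0 1 0 (- D) u x y) = (u - x) * (u ^+ 2 - D * y ^+ 2)) /\
      (forall D v1 w1 v2 w2 : R,
         (v1 * v2 + D * w1 * w2) ^+ 2 - D * (v1 * w2 + v2 * w1) ^+ 2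
         = (v1 ^+ 2 - D * w1 ^+ 2) * (v2 ^+ 2 - D * w2 ^+ 2)) /\
      (* (ii) *)
      (forall B C u x y : R,
         \det (Nmx 0 C (- B) 1 u x y) = (u - C * x + B * y) * Qform B C u y) /\
      (forall B C v1 w1 v2 w2 : R,
         Qform B C (v1 * v2 - C * w1 * w2) (v1 * w2 + v2 * w1 + B * w1 * w2)
         = Qform B C v1 w1 * Qform B C v2 w2).
Proof.
move=> u3 x3 y3.
split; first exact: mulN.
split; first by rewrite mulN /u3 /x3 /y3; congr Nmx; ring.
split; first by move=> *; rewrite detN; ring.
split; first by move=> *; ring.
split; first by move=> *; rewrite detN /Qform; ring.
by move=> *; rewrite /Qform; ring.
Qed.
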